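(* Let $(M,\circ,\mathrm{OR})$ be a free $\mathbb{D}$-module of rank 3 endowed with a scalar product $\circ$ and an orientation $\mathrm{OR}$. Let $E$ be the set of real 3-dimensional subspaces $P\subset M$ such that $\mathfrak{Du}(x\circ y)=0$ for all $x,y\in P$ and $P\cap\epsilon M=\{0\}$. Then $E$, with the subtraction $B-A$ described in the context, is a 3-dimensional Euclidean affine space modelled on $(V,\cdot,\mathrm{or})$, where $V=M/\epsilon M$ carries the inner product and orientation induced from $M$. Moreover, if $\mathcal{S}$ denotes the space of screws on $E$ with its natural $\mathbb{D}$-module geometry structure, then the map $\beta:M\to\mathcal{S}$ defined by $\beta(z)(A)=\mathcal{s}(A)$, where $z=a+\epsilon\,\mathcal{s}(A)$ is the unique decomposition with $a\in A$ and $\mathcal{s}(A)\in V$, is a well-defined $\mathbb{D}$-linear isomorphism which preserves the scalar product and the orientation, and hence also the cross product ($\beta(z_1\times z_2)=[\beta(z_1),\beta(z_2)]$).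
   Context: $\mathbb{D}=\{a+\epsilon b: a,b\in\mathbb{R}\}$ is the ring of dual numbers, $\epsilon^2=0$, with $\mathfrak{Re}(a+\epsilon b)=a$, $\mathfrak{Du}(a+\epsilon b)=b$. A scalar product on a free $\mathbb{D}$-module $M$ is a symmetric $\mathbb{D}$-bilinear map $\circ:M\times M\to\mathbb{D}$ with $\mathfrak{Re}(x\circ x)\ge0$ for all $x$, with equality iff $x\in\epsilon M$. An orientation of $M$ is a choice of one of the two equivalence classes of ordered bases, where $\{b'_j=A_{jk}b_k\}\sim\{b_k\}$ iff $\det\mathfrak{Re}(A)>0$ ($A$ a dual-number matrix). $V=M/\epsilon M$, with quotient map $\pi$; $\mathfrak{Re}(\cdot\circ\cdot)$ descends to an inner product $\cdot$ on $V$, and the orientation of $M$ descends to an orientation of $V$ (bases of $M$ project to bases of $V$). Multiplication by $\epsilon$ induces a real isomorphism $V\to\epsilon M$, also denoted $\epsilon$. On $M$, the cross product is $x\times y=x^iy^j\epsilon_{ijk}m_k$ where $x=x^im_i$, $y=y^im_i$ and $\{m_i\}$ is any positive orthonormal basis ($m_i\circ m_j=\delta_{ij}$). For $P\in E$ and $v\in V$, $v^P$ is the unique element of $P$ with $\pi(v^P)=v$; since $M=P\oplus\epsilon M$, each $z\in M$ decomposes uniquely as $z=a+\epsilon v$ with $a\in P$, $v\in V$. Subtraction on $E$: for $A,B\in E$ and a positive orthonormal basis $\{e_i\}$ of $V$, one has $e^B_i=e^A_i+\epsilon\,\epsilon_{ijk}d^k e^A_j$ for a real vector $(d^k)$, and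 $B-A:=d^ke_k\in V$. Screws on a Euclidean space $E$ modelled on $(V,\cdot,\mathrm{or})$: a screw is a map $\mathcal{s}:E\to V$ for which there is $s\in V$ (the resultant) with $\mathcal{s}(Q)-\mathcal{s}(P)=s\times(Q-P)$ for all $P,Q\in E$; they form a 6-dimensional real vector space $\mathcal{S}$. Its natural $\mathbb{D}$-module geometry: $\epsilon\,\mathcal{s}$ is the constant field equal to the resultant $s$; scalar product $\mathcal{s}_1\circ\mathcal{s}_2=s_1\cdot s_2+\epsilon(s_1\cdot\mathcal{s}_2(P)+\mathcal{s}_1(P)\cdot s_2)$ (independent of $P$); orientation: for a positive orthonormal frame $(P,(e_1,e_2,e_3))$ of $E$, the basis $(\ell_1,\ell_2,\ell_3)$, $\ell_i(Q)=e_i\times(Q-P)$, is declared positive. The commutator of screws is $[\mathcal{s}_1,\mathcal{s}_2](P)=s_1\times\mathcal{s}_2(P)+\mathcal{s}_1(P)\times s_2$. *)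

(* Defs.v *)
From HB Require Import structures.
From mathcomp Require Import all_boot all_order all_algebra.
From mathcomp Require Import reals.
Set Implicit Arguments. Unset Strict Implicit. Unset Printing Implicit Defensive.
Import Order.TTheory GRing.Theory Num.Theory.
Local Open Scope ring_scope.

(* ---------- Dual numbers  a + eps b  represented as pairs (a, b) ---------- *)
Definition dual (R : Type) := (R * R)%type.
Definition dRe (R : Type) (z : dual R) : R := z.1.
Definition dDu (R : Type) (z : dual R) : R := z.2.
Definition dual_add (R : nzRingType) (z w : dual R) : dual R := (z.1 + w.1, z.2 + w.2).
(* (a + eps b)(c + eps d) = ac + eps (ad + bc) *)
Definition dual_mul (R : nzRingType) (z w : dual R) : dual R :=
  (z.1 * w.1, z.1 * w.2 + z.2 * w.1).
Definition dual_real (R : nzRingType) (r : R) : dual R := (r, 0).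
Definition dual_epsilon (R : nzRingType) : dual R := (0, 1).

(* Levi-Civita symbol on indices 0,1,2 *)
Definition levi (R : fieldType) (i j k : 'I_3) : R :=
  ((j : nat)%:R - (i : nat)%:R) * ((k : nat)%:R - (j : nat)%:R)
  * ((k : nat)%:R - (i : nat)%:R) / 2%:R.

Section Defs.
Variable R : realType.
Variables M V : vectType R.

(* A D-module structure on the real vector space M is given by a real-linear
   eps : M -> M with eps \o eps = 0; (a + eps b) . x = a x + b eps(x). *)
Definition dscale (eps : M -> M) (c : dual R) (x : M) : M := c.1 *: x + c.2 *: eps x.

Definition dcomb (eps : M -> M) (b : 'I_3 -> M) (c : 'I_3 -> dual R) : M :=
  \sum_i dscale eps (c i) (b i).

Definition is_Dbasis (eps : M -> M) (b : 'I_3 -> M) : Prop :=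
  (forall x, exists c, x = dcomb eps b c) /\
  (forall c c', dcomb eps b c = dcomb eps b c' -> forall i, c i = c' i).

(* b is a positive basis w.r.t. the orientation represented by the D-basis OR:
   b_j = A_jk OR_k with A = A0 + eps A1 a dual matrix and det Re(A) = det A0 > 0 *)
Definition posM (eps : M -> M) (OR : 'I_3 -> M) (b : 'I_3 -> M) : Prop :=
  is_Dbasis eps b /\
  exists A0 A1 : 'M[R]_3,
    (forall j, b j = \sum_k (A0 j k *: OR k + A1 j k *: eps (OR k))) /\ 0 < \det A0.

Definition orthonormalM (sp : M -> M -> dual R) (m : 'I_3 -> M) : Prop :=
  forall i j, sp (m i) (m j) = dual_real (i == j)%:R.

Definition posV (pi : M -> V) (OR : 'I_3 -> M) (e : 'I_3 -> V) : Prop :=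
  exists C : 'M[R]_3, (forall i, e i = \sum_k C i k *: pi (OR k)) /\ 0 < \det C.

Definition orthonormalV (dotV : V -> V -> R) (e : 'I_3 -> V) : Prop :=
  forall i j, dotV (e i) (e j) = (i == j)%:R.

Definition posONV pi OR dotV (e : 'I_3 -> V) : Prop :=
  posV pi OR e /\ orthonormalV dotV e.

Definition crossV (dotV : V -> V -> R) (e : 'I_3 -> V) (u w : V) : V :=
  \sum_i \sum_j \sum_k (@levi R i j k * (dotV u (e i) * dotV w (e j))) *: e k.

Definition inE (eps : M -> M) (sp : M -> M -> dual R) (P : {vspace M}) : Prop :=
  \dim P = 3%N /\
  (forall x y, x \in P -> y \in P -> dDu (sp x y) = 0) /\
  (forall x, x \in P -> (exists y, x = eps y) -> x = 0).

Definition Espace (eps : M -> M) (sp : M -> M -> dual R) : Type :=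
  {P : {vspace M} | inE eps sp P}.

Definition is_lift (pi : M -> V) (P : {vspace M}) (v : V) (x : M) : Prop :=
  x \in P /\ pi x = v.

Definition SubRel (eps : M -> M) (pi : M -> V) OR dotV
    (B A : {vspace M}) (d : V) : Prop :=
  forall e, posONV pi OR dotV e ->
  forall xA xB : 'I_3 -> M,
    (forall i, is_lift pi A (e i) (xA i)) ->
    (forall i, is_lift pi B (e i) (xB i)) ->
    forall i, xB i = xA i + \sum_j \sum_k (@levi R i j k * dotV d (e k)) *: eps (xA j).

Definition is_screw (E : Type) (minus : E -> E -> V) pi OR dotV
    (s : E -> V) (r : V) : Prop :=
  forall P Q e, posONV pi OR dotV e -> s Q - s P = crossV dotV e r (minus Q P).

End Defs.

(* Main.v *)
From HB Require Import structures.
From mathcomp Require Import all_boot all_order all_algebra.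
From mathcomp Require Import reals ring lra.
Require Import Defs.
From Stdlib Require Import ClassicalEpsilon ProofIrrelevance FunctionalExtensionality.
Set Implicit Arguments. Unset Strict Implicit. Unset Printing Implicit Defensive.
Import Order.TTheory GRing.Theory Num.Theory.
Local Open Scope ring_scope.

Notation i0 := (@Ordinal 3 0 isT).
Notation i1 := (@Ordinal 3 1 isT).
Notation i2 := (@Ordinal 3 2 isT).
Lemma sum3 (V : nmodType) (F : 'I_3 -> V) : \sum_(i < 3) F i = F i0 + F i1 + F i2.
Proof. by rewrite !big_ord_recr big_ord0 /= add0r; congr (F _ + F _ + F _); apply: val_inj. Qed.
Lemma ord3P (P : 'I_3 -> Prop) : P i0 -> P i1 -> P i2 -> forall i, P i.
Proof.
move=> h0 h1 h2 [[|[|[|n]]] Hn] //.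
- by rewrite (bool_irrelevance Hn isT).
- by rewrite (bool_irrelevance Hn isT).
- by rewrite (bool_irrelevance Hn isT).
Qed.
Definition aa {R : Type} (A : 'M[R]_3) (m n : nat) := A (inord m) (inord n).
Lemma det3 (R : comNzRingType) (A : 'M[R]_3) : \det A =
  A i0 i0 * A i1 i1 * A i2 i2 - A i0 i0 * A i1 i2 * A i2 i1
 - A i0 i1 * A i1 i0 * A i2 i2 + A i0 i1 * A i1 i2 * A i2 i0
 + A i0 i2 * A i1 i0 * A i2 i1 - A i0 i2 * A i1 i1 * A i2 i0.
Proof.
rewrite (expand_det_row _ i0) sum3 /cofactor.
rewrite !(expand_det_row _ ord0) !big_ord_recr !big_ord0 /= /cofactor !det_mx11 !mxE /=.
have HA : forall i j : 'I_3, A i j = aa A i j by move=> i j; rewrite /aa !inord_val.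
rewrite !HA /= /bump /=. ring.
Qed.

Definition cx (R : nzRingType) (p q : 'I_3 -> R) (k : 'I_3) : R :=
  match (k : nat) with
  | 0 => p i1 * q i2 - p i2 * q i1
  | 1 => p i2 * q i0 - p i0 * q i2
  | _ => p i0 * q i1 - p i1 * q i0
  end.

Lemma leviS (R : realType) (p q : 'I_3 -> R) k :
  \sum_i \sum_j levi R i j k * (p i * q j) = cx p q k.
Proof. by move: k; apply: ord3P; rewrite !sum3 /levi /cx /=; field. Qed.

Lemma gsum (U W : zmodType) (g : U -> W) (gD : forall x y, g (x + y) = g x + g y)
  I (r : seq I) (P : pred I) (F : I -> U) :
  g (\sum_(i <- r | P i) F i) = \sum_(i <- r | P i) g (F i).
Proof.
have g0 : g 0 = 0 by apply: (addrI (g 0)); rewrite -gD !addr0.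
exact: (big_morph g gD g0).
Qed.

Lemma levi_cx (R : realType) (i j k : 'I_3) :
  levi R i j k = cx (fun l => (l == i)%:R) (fun l => (l == j)%:R) k.
Proof.
by move: i j k; apply: ord3P; apply: ord3P; apply: ord3P; rewrite /levi /cx /=; try field.
Qed.

Lemma cx_cof (R : comNzRingType) (Q : 'M[R]_3) (p q : 'I_3 -> R) c :
  \sum_k cx (fun i => \sum_a Q i a * p a) (fun i => \sum_a Q i a * q a) k * Q k c
  = \det Q * cx p q c.
Proof. by move: c; apply: ord3P; rewrite det3 !sum3 /cx /= !sum3; ring. Qed.

Section Main.
Variable R : realType.
Variables M V : vectType R.
Variable eps : {linear M -> M}.
Variable sp : M -> M -> dual R.
Variable OR : 'I_3 -> M.
Variable pi : {linear M -> V}.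
Variable dotV : V -> V -> R.
Hypothesis epsK : forall x, eps (eps x) = 0.
Hypothesis spC : forall x y, sp x y = sp y x.
Hypothesis spD : forall x y z, sp (x + y) z = dual_add (sp x z) (sp y z).
Hypothesis spZ : forall (a : R) x y, sp (a *: x) y = dual_mul (dual_real a) (sp x y).
Hypothesis spE : forall x y, sp (eps x) y = dual_mul (dual_epsilon R) (sp x y).
Hypothesis sppos : forall x, 0 <= dRe (sp x x).
Hypothesis sp0 : forall x, dRe (sp x x) = 0 <-> exists y, x = eps y.
Hypothesis ORb : is_Dbasis eps OR.
Hypothesis pisurj : forall v, exists x, pi x = v.
Hypothesis piker : forall x, pi x = 0 <-> exists y, x = eps y.
Hypothesis dotpi : forall x y, dotV (pi x) (pi y) = dRe (sp x y).

Lemma ReD x y z : dRe (sp (x + y) z) = dRe (sp x z) + dRe (sp y z).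
Proof. by rewrite spD. Qed.
Lemma DuD x y z : dDu (sp (x + y) z) = dDu (sp x z) + dDu (sp y z).
Proof. by rewrite spD. Qed.
Lemma ReZ a x y : dRe (sp (a *: x) y) = a * dRe (sp x y).
Proof. by rewrite spZ. Qed.
Lemma DuZ a x y : dDu (sp (a *: x) y) = a * dDu (sp x y).
Proof. by rewrite spZ /dDu /= mul0r addr0. Qed.
Lemma ReE x y : dRe (sp (eps x) y) = 0.
Proof. by rewrite spE /dRe /= mul0r. Qed.
Lemma DuE x y : dDu (sp (eps x) y) = dRe (sp x y).
Proof. by rewrite spE /dDu /= mul0r add0r mul1r. Qed.
Lemma ReDr x y z : dRe (sp z (x + y)) = dRe (sp z x) + dRe (sp z y).
Proof. by rewrite !(spC z) ReD. Qed.
Lemma DuDr x y z : dDu (sp z (x + y)) = dDu (sp z x) + dDu (sp z y).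
Proof. by rewrite !(spC z) DuD. Qed.
Lemma ReZr a x y : dRe (sp y (a *: x)) = a * dRe (sp y x).
Proof. by rewrite !(spC y) ReZ. Qed.
Lemma DuZr a x y : dDu (sp y (a *: x)) = a * dDu (sp y x).
Proof. by rewrite !(spC y) DuZ. Qed.
Lemma ReEr x y : dRe (sp y (eps x)) = 0.
Proof. by rewrite spC ReE. Qed.
Lemma DuEr x y : dDu (sp y (eps x)) = dRe (sp y x).
Proof. by rewrite spC DuE spC. Qed.
Lemma ReN x y : dRe (sp (- x) y) = - dRe (sp x y).
Proof. by rewrite -scaleN1r ReZ mulN1r. Qed.
Lemma DuN x y : dDu (sp (- x) y) = - dDu (sp x y).
Proof. by rewrite -scaleN1r DuZ mulN1r. Qed.
Lemma ReNr x y : dRe (sp y (- x)) = - dRe (sp y x).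
Proof. by rewrite -scaleN1r ReZr mulN1r. Qed.
Lemma DuNr x y : dDu (sp y (- x)) = - dDu (sp y x).
Proof. by rewrite -scaleN1r DuZr mulN1r. Qed.
Lemma Re_suml I (r : seq I) (P : pred I) (F : I -> M) y :
  dRe (sp (\sum_(i <- r | P i) F i) y) = \sum_(i <- r | P i) dRe (sp (F i) y).
Proof. exact: (gsum (g := fun x => dRe (sp x y)) (fun a b => ReD a b y)). Qed.
Lemma Du_suml I (r : seq I) (P : pred I) (F : I -> M) y :
  dDu (sp (\sum_(i <- r | P i) F i) y) = \sum_(i <- r | P i) dDu (sp (F i) y).
Proof. exact: (gsum (g := fun x => dDu (sp x y)) (fun a b => DuD a b y)). Qed.
Lemma Re_sumr I (r : seq I) (P : pred I) (F : I -> M) y :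
  dRe (sp y (\sum_(i <- r | P i) F i)) = \sum_(i <- r | P i) dRe (sp y (F i)).
Proof. exact: (gsum (g := fun x => dRe (sp y x)) (fun a b => ReDr a b y)). Qed.
Lemma Du_sumr I (r : seq I) (P : pred I) (F : I -> M) y :
  dDu (sp y (\sum_(i <- r | P i) F i)) = \sum_(i <- r | P i) dDu (sp y (F i)).
Proof. exact: (gsum (g := fun x => dDu (sp y x)) (fun a b => DuDr a b y)). Qed.

Lemma pi_eps y : pi (eps y) = 0.
Proof. by apply/piker; exists y. Qed.

Lemma eps0P x : eps x = 0 <-> pi x = 0.
Proof.
split=> [ex|/piker [y ->]]; last by rewrite epsK.
have : dRe (sp x x) = 0.
  by rewrite -DuE ex -(scale0r (0 : M)) DuZ mul0r.
by move/sp0 => [y ->]; rewrite pi_eps.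
Qed.

Lemma epsEP x y : eps x = eps y <-> pi x = pi y.
Proof.
split=> h.
  by apply/eqP; rewrite -subr_eq0 -linearB; apply/eqP/eps0P; rewrite linearB h subrr.
by apply/eqP; rewrite -subr_eq0 -linearB; apply/eqP/eps0P; rewrite linearB h subrr.
Qed.

Lemma dotC u w : dotV u w = dotV w u.
Proof. by have [x <-] := pisurj u; have [y <-] := pisurj w; rewrite !dotpi spC. Qed.
Lemma dotDl u u' w : dotV (u + u') w = dotV u w + dotV u' w.
Proof.
have [x <-] := pisurj u; have [x' <-] := pisurj u'; have [y <-] := pisurj w.
by rewrite -linearD !dotpi ReD.
Qed.
Lemma dotZl a u w : dotV (a *: u) w = a * dotV u w.
Proof.
have [x <-] := pisurj u; have [y <-] := pisurj w.
by rewrite -linearZ !dotpi ReZ.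
Qed.
Lemma dotDr u u' w : dotV w (u + u') = dotV w u + dotV w u'.
Proof. by rewrite !(dotC w) dotDl. Qed.
Lemma dotZr a u w : dotV w (a *: u) = a * dotV w u.
Proof. by rewrite !(dotC w) dotZl. Qed.
Lemma dotNl u w : dotV (- u) w = - dotV u w.
Proof. by rewrite -scaleN1r dotZl mulN1r. Qed.
Lemma dotNr u w : dotV w (- u) = - dotV w u.
Proof. by rewrite -scaleN1r dotZr mulN1r. Qed.
Lemma dotBl u u' w : dotV (u - u') w = dotV u w - dotV u' w.
Proof. by rewrite dotDl dotNl. Qed.
Lemma dotBr u u' w : dotV w (u - u') = dotV w u - dotV w u'.
Proof. by rewrite dotDr dotNr. Qed.
Lemma dot0l w : dotV 0 w = 0.
Proof. by rewrite -(scale0r (0 : V)) dotZl mul0r. Qed.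
Lemma dot0r w : dotV w 0 = 0.
Proof. by rewrite dotC dot0l. Qed.
Lemma dot_suml I (r : seq I) (P : pred I) (F : I -> V) w :
  dotV (\sum_(i <- r | P i) F i) w = \sum_(i <- r | P i) dotV (F i) w.
Proof. exact: (gsum (g := fun x => dotV x w) (fun a b => dotDl a b w)). Qed.
Lemma dot_sumr I (r : seq I) (P : pred I) (F : I -> V) w :
  dotV w (\sum_(i <- r | P i) F i) = \sum_(i <- r | P i) dotV w (F i).
Proof. exact: (gsum (g := fun x => dotV w x) (fun a b => dotDr a b w)). Qed.
Lemma dot_pos u : u != 0 -> 0 < dotV u u.
Proof.
have [x <-] := pisurj u; rewrite dotpi => nz.
rewrite lt_def sppos andbT; apply/eqP => /sp0 [y ey].
by move: nz; rewrite ey pi_eps eqxx.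
Qed.
Lemma dot_ext u u' : (forall w, dotV u w = dotV u' w) -> u = u'.
Proof.
move=> h; apply/eqP; rewrite -subr_eq0; apply/negPn/negP => /dot_pos.
by rewrite dotBl !h subrr ltxx.
Qed.

Definition o k := pi (OR k).

Lemma pi_dscale c x : pi (dscale eps c x) = c.1 *: pi x.
Proof. by rewrite /dscale linearD !linearZ_LR pi_eps scaler0 addr0. Qed.
Lemma eps_dscale c x : eps (dscale eps c x) = c.1 *: eps x.
Proof. by rewrite /dscale linearD !linearZ_LR epsK scaler0 addr0. Qed.

Lemma o_span v : exists a : 'I_3 -> R, v = \sum_k a k *: o k.
Proof.
have [x <-] := pisurj v; have [c ->] := ORb.1 x.
exists (fun k => (c k).1); rewrite /dcomb linear_sum; apply: eq_bigr => k _.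
by rewrite pi_dscale.
Qed.

Lemma o_uniq a b : \sum_k a k *: o k = \sum_k b k *: o k -> forall k, a k = b k.
Proof.
move=> h.
have : pi (\sum_k (a k - b k) *: OR k) = 0.
  rewrite linear_sum; under eq_bigr do rewrite linearZ_LR scalerBl.
  by rewrite sumrB h subrr.
move/piker => [y hy].
have [c hc] := ORb.1 y.
have : dcomb eps OR (fun k => (a k - b k, 0)) = dcomb eps OR (fun k => (0, (c k).1)).
  rewrite /dcomb /dscale /=.
  under eq_bigr do rewrite scale0r addr0.
  under [in RHS]eq_bigr do rewrite scale0r add0r.
  rewrite hy hc /dcomb linear_sum; apply: eq_bigr => k _.
  by rewrite eps_dscale.
move/(ORb.2) => H k; have := H k; case => h1 _; by apply/eqP; rewrite -subr_eq0 h1.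
Qed.

Lemma dimV : \dim (fullv : {vspace V}) = 3%N.
Proof.
apply: (@size_basis _ _ _ 3 [tuple o i | i < 3]).
apply/andP; split.
  apply/eqP/vspaceP => v; rewrite memvf; have [a ->] := o_span v.
  apply: memv_suml => i _; apply: memvZ; apply: memv_span.
  by have := mem_tnth i [tuple o i | i < 3]; rewrite tnth_mktuple.
apply/freeP => k Hk i.
have h0 : \sum_i k i *: o i = 0.
  by rewrite -[in RHS]Hk; apply: eq_bigr => j _; rewrite -tnth_nth tnth_mktuple.
have : \sum_i k i *: o i = \sum_i (fun _ => 0) i *: o i.
  by rewrite h0 big1 // => j _; rewrite scale0r.
by move/o_uniq ->.
Qed.

Definition E := Espace eps sp.

Lemma E_int (A : E) x : x \in sval A -> pi x = 0 -> x = 0.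
Proof.
case: A => P [_ [_ HP]] /= xP /piker ex; exact: HP.
Qed.
Lemma E_iso (A : E) x y : x \in sval A -> y \in sval A -> dDu (sp x y) = 0.
Proof. case: A => P [_ [HP _]] /=; exact: HP. Qed.

Lemma lift_ex (A : E) v : exists a, a \in sval A /\ pi a = v.
Proof.
case: A => P [dP [_ HP]] /=.
have Hk : (P :&: lker (linfun pi))%VS = 0%VS.
  apply/eqP; rewrite -subv0; apply/subvP => x; rewrite memv_cap memv_ker lfunE memv0.
  by case/andP => xP /eqP /piker ex; apply/eqP; apply: HP.
have Hf : (linfun pi @: P)%VS = fullv.
  apply/eqP; rewrite eqEdim subvf dimV (limg_dim_eq Hk) dP //.
have : v \in (linfun pi @: P)%VS by rewrite Hf memvf.
by case/memv_imgP => a aP ->; exists a; rewrite lfunE.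
Qed.

Definition lift (A : E) (v : V) : M :=
  epsilon (inhabits 0) (fun a => a \in sval A /\ pi a = v).
Lemma liftP (A : E) v : lift A v \in sval A /\ pi (lift A v) = v.
Proof. exact: (epsilon_spec (inhabits 0) _ (lift_ex A v)). Qed.
Lemma lift_in (A : E) v : lift A v \in sval A. Proof. exact: (liftP A v).1. Qed.
Lemma pi_lift (A : E) v : pi (lift A v) = v. Proof. exact: (liftP A v).2. Qed.
Lemma lift_uniq (A : E) v a : a \in sval A -> pi a = v -> lift A v = a.
Proof.
move=> aA pa; apply/eqP; rewrite -subr_eq0; apply/eqP; apply: (@E_int A).
  by rewrite memvB // lift_in.
by rewrite linearB pi_lift pa subrr.
Qed.
Lemma liftD (A : E) u w : lift A (u + w) = lift A u + lift A w.
Proof. by apply: lift_uniq; rewrite ?memvD ?lift_in // linearD !pi_lift. Qed.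
Lemma liftZ (A : E) a u : lift A (a *: u) = a *: lift A u.
Proof. by apply: lift_uniq; rewrite ?memvZ ?lift_in // linearZ_LR !pi_lift. Qed.
Lemma lift_sum (A : E) I (r : seq I) (P : pred I) (F : I -> V) :
  lift A (\sum_(i <- r | P i) F i) = \sum_(i <- r | P i) lift A (F i).
Proof. exact: (gsum (g := lift A) (liftD A)). Qed.
Lemma lift_pi (A : E) a : a \in sval A -> lift A (pi a) = a.
Proof. by move=> aA; apply: lift_uniq. Qed.
Lemma lift_iso (A : E) u w : dDu (sp (lift A u) (lift A w)) = 0.
Proof. by apply: E_iso; apply: lift_in. Qed.
Lemma Re_lift (A B : E) u w : dRe (sp (lift A u) (lift B w)) = dotV u w.
Proof. by rewrite -dotpi !pi_lift. Qed.
Lemma eps_lift_inj (A : E) u w : eps (lift A u) = eps (lift A w) -> u = w.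
Proof. by move/epsEP; rewrite !pi_lift. Qed.
Lemma eps_lift (A B : E) u : eps (lift A u) = eps (lift B u).
Proof. by apply/epsEP; rewrite !pi_lift. Qed.

Definition lc (a : 'I_3 -> R) : V := \sum_k a k *: o k.
Lemma lcD a b : lc a + lc b = lc (fun k => a k + b k).
Proof. by rewrite /lc -big_split; apply: eq_bigr => k _; rewrite scalerDl. Qed.
Lemma lcZ s a : s *: lc a = lc (fun k => s * a k).
Proof. by rewrite /lc scaler_sumr; apply: eq_bigr => k _; rewrite scalerA. Qed.
Lemma lcB a b : lc a - lc b = lc (fun k => a k - b k).
Proof. by rewrite -scaleN1r lcZ lcD; apply: eq_bigr => k _; rewrite mulN1r. Qed.
Lemma lc_o k : o k = lc (fun l => (l == k)%:R).
Proof.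
move: k; apply: ord3P; rewrite /lc sum3 /= !scale0r ?scale1r ?addr0 ?add0r //.
Qed.
Lemma lc_ext a b : (forall k, a k = b k) -> lc a = lc b.
Proof. by move=> h; apply: eq_bigr => k _; rewrite h. Qed.
Lemma o_indep a : lc a = 0 -> forall k, a k = 0.
Proof.
move=> h; apply: (o_uniq (b := fun _ => 0)); rewrite -/(lc a) h.
by rewrite big1 // => k _; rewrite scale0r.
Qed.

Definition nrm (s : R) := (Num.sqrt s)^-1.
Lemma nrmK s : 0 < s -> nrm s * (nrm s * s) = 1.
Proof.
move=> hs; rewrite /nrm -{3}(sqr_sqrtr (ltW hs)) expr2.
have : Num.sqrt s != 0 by rewrite gt_eqF // sqrtr_gt0.
by move=> nz; field.
Qed.
Lemma nrm_gt0 s : 0 < s -> 0 < nrm s.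
Proof. by move=> hs; rewrite /nrm invr_gt0 sqrtr_gt0. Qed.

Definition a0 := nrm (dotV (o i0) (o i0)).
Definition g0 := a0 *: o i0.
Definition s10 := dotV (o i1) g0.
Definition w1 := o i1 - s10 *: g0.
Definition a1 := nrm (dotV w1 w1).
Definition g1 := a1 *: w1.
Definition s20 := dotV (o i2) g0.
Definition s21 := dotV (o i2) g1.
Definition w2 := o i2 - s20 *: g0 - s21 *: g1.
Definition a2 := nrm (dotV w2 w2).
Definition g2 := a2 *: w2.

Definition c0 (k : 'I_3) : R := a0 * (k == i0)%:R.
Definition cw1 (k : 'I_3) : R := (k == i1)%:R - s10 * c0 k.
Definition c1 (k : 'I_3) : R := a1 * cw1 k.
Definition cw2 (k : 'I_3) : R := (k == i2)%:R - s20 * c0 k - s21 * c1 k.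
Definition c2 (k : 'I_3) : R := a2 * cw2 k.

Lemma g0E : g0 = lc c0.
Proof. by rewrite /g0 lc_o lcZ. Qed.
Lemma w1E : w1 = lc cw1.
Proof. by rewrite /w1 g0E lc_o lcZ lcB. Qed.
Lemma g1E : g1 = lc c1.
Proof. by rewrite /g1 w1E lcZ. Qed.
Lemma w2E : w2 = lc cw2.
Proof. by rewrite /w2 g0E g1E lc_o !lcZ !lcB. Qed.
Lemma g2E : g2 = lc c2.
Proof. by rewrite /g2 w2E lcZ. Qed.

Lemma o0_nz : o i0 != 0.
Proof.
apply/eqP; rewrite lc_o => /o_indep /(_ i0) /eqP; by rewrite /= oner_eq0.
Qed.
Lemma w1_nz : w1 != 0.
Proof.
apply/eqP; rewrite w1E => /o_indep /(_ i1) /eqP.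
by rewrite /cw1 /c0 /= mulr0 mulr0 subr0 oner_eq0.
Qed.
Lemma w2_nz : w2 != 0.
Proof.
apply/eqP; rewrite w2E => /o_indep /(_ i2) /eqP.
by rewrite /cw2 /c1 /cw1 /c0 /= !mulr0 !subr0 !mulr0 !subr0 oner_eq0.
Qed.

Lemma a0_gt0 : 0 < a0. Proof. exact/nrm_gt0/dot_pos/o0_nz. Qed.
Lemma a1_gt0 : 0 < a1. Proof. exact/nrm_gt0/dot_pos/w1_nz. Qed.
Lemma a2_gt0 : 0 < a2. Proof. exact/nrm_gt0/dot_pos/w2_nz. Qed.

Lemma g00 : dotV g0 g0 = 1.
Proof. by rewrite /g0 dotZl dotZr nrmK // dot_pos // o0_nz. Qed.
Lemma g11 : dotV g1 g1 = 1.
Proof. by rewrite /g1 dotZl dotZr nrmK // dot_pos // w1_nz. Qed.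
Lemma g22 : dotV g2 g2 = 1.
Proof. by rewrite /g2 dotZl dotZr nrmK // dot_pos // w2_nz. Qed.
Lemma g10 : dotV g1 g0 = 0.
Proof.
by rewrite /g1 dotZl /w1 dotBl (dotZl s10) g00 /s10 mulr1 subrr mulr0.
Qed.
Lemma g20 : dotV g2 g0 = 0.
Proof.
by rewrite /g2 dotZl /w2 !dotBl (dotZl s20) (dotZl s21) g00 g10 /s20 mulr1 mulr0 subrr subr0 mulr0.
Qed.
Lemma g21 : dotV g2 g1 = 0.
Proof.
by rewrite /g2 dotZl /w2 !dotBl (dotZl s20) (dotZl s21) g11 (dotC g0) g10 /s21 mulr1 mulr0 subr0 subrr mulr0.
Qed.

Definition fGS (i : 'I_3) : V := match (i : nat) with 0 => g0 | 1 => g1 | _ => g2 end.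

Lemma fGS0 : fGS i0 = g0. Proof. by []. Qed.
Lemma fGS1 : fGS i1 = g1. Proof. by []. Qed.
Lemma fGS2 : fGS i2 = g2. Proof. by []. Qed.
Definition CGS : 'M[R]_3 :=
  \matrix_(i, k) (match (i : nat) with 0 => c0 k | 1 => c1 k | _ => c2 k end).
Lemma CGS0 k : CGS i0 k = c0 k. Proof. by rewrite mxE. Qed.
Lemma CGS1 k : CGS i1 k = c1 k. Proof. by rewrite mxE. Qed.
Lemma CGS2 k : CGS i2 k = c2 k. Proof. by rewrite mxE. Qed.

Lemma exists_ON : exists f, posONV pi OR dotV f.
Proof.
exists fGS; split.
  exists CGS; split.
    apply: ord3P; rewrite ?fGS0 ?fGS1 ?fGS2 ?g0E ?g1E ?g2E /lc /o; apply: eq_bigr => k _;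
      rewrite ?CGS0 ?CGS1 ?CGS2 //.
  rewrite det3 !CGS0 !CGS1 !CGS2 /c2 /cw2 /c1 /cw1 /c0 /=.
  have H : 0 < a0 * (a1 * a2) by rewrite !mulr_gt0 ?a0_gt0 ?a1_gt0 ?a2_gt0.
  by apply: (lt_le_trans H); rewrite le_eqVlt; apply/orP; left; apply/eqP; ring.
apply: ord3P; apply: ord3P;
  rewrite ?fGS0 ?fGS1 ?fGS2 ?g00 ?g11 ?g22 ?g10 ?g20 ?g21 ?(dotC g0 g1) ?(dotC g0 g2) ?(dotC g1 g2) ?g10 ?g20 ?g21 //.
Qed.

Definition co (e : 'I_3 -> V) (u : V) (i : 'I_3) : R := dotV u (e i).

Lemma ON_dotsum (e : 'I_3 -> V) (a : 'I_3 -> R) j : orthonormalV dotV e ->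
  dotV (\sum_i a i *: e i) (e j) = a j.
Proof.
move=> eON; rewrite dot_suml; under eq_bigr do rewrite dotZl eON.
by move: j; apply: ord3P; rewrite sum3 /= ?mulr0 ?mulr1 ?addr0 ?add0r.
Qed.

Lemma ON_expand (e : 'I_3 -> V) : orthonormalV dotV e ->
  forall v, v = \sum_i dotV v (e i) *: e i.
Proof.
move=> eON v.
pose X := [tuple e i | i < 3].
have XE : forall i : 'I_3, X`_i = e i by move=> i; rewrite -tnth_nth tnth_mktuple.
have fX : free X.
  apply/freeP => k Hk i.
  have : \sum_i k i *: e i = 0.
    by rewrite -[in RHS]Hk; apply: eq_bigr => j _; rewrite XE.
  by move=> h; rewrite -(ON_dotsum k i eON) h dot0l.
have sX : (<<X>> = fullv)%VS.
  apply/eqP; rewrite eqEdim subvf dimV; move: fX; rewrite /free => /eqP ->.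
  by rewrite size_tuple.
have : v \in <<X>>%VS by rewrite sX memvf.
move/coord_span => vE.
have cE : forall j, coord X j v = dotV v (e j).
  move=> j; rewrite {2}vE; under eq_bigr do rewrite XE.
  by rewrite ON_dotsum.
rewrite {1}vE; apply: eq_bigr => i _; by rewrite XE cE.
Qed.

Lemma ON_dot (e : 'I_3 -> V) : orthonormalV dotV e ->
  forall u w, dotV u w = \sum_i dotV u (e i) * dotV w (e i).
Proof.
move=> eON u w.
have -> : dotV u w = dotV (\sum_i dotV u (e i) *: e i) w by rewrite -(ON_expand eON).
rewrite dot_suml.
by apply: eq_bigr => i _; rewrite dotZl (dotC (e i)).
Qed.

Lemma ON_ext (e : 'I_3 -> V) : orthonormalV dotV e ->
  forall u w, (forall i, dotV u (e i) = dotV w (e i)) -> u = w.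
Proof.
move=> eON u w h; rewrite (ON_expand eON u) [RHS](ON_expand eON w).
by apply: eq_bigr => i _; rewrite h.
Qed.

Lemma crossV_coord (e : 'I_3 -> V) u w :
  crossV dotV e u w = \sum_k cx (co e u) (co e w) k *: e k.
Proof.
rewrite /crossV; under eq_bigr do rewrite exchange_big.
rewrite exchange_big; apply: eq_bigr => k _.
rewrite -leviS scaler_suml; apply: eq_bigr => i _.
by rewrite scaler_suml.
Qed.

Lemma cross_co (e : 'I_3 -> V) : orthonormalV dotV e ->
  forall u w c, dotV (crossV dotV e u w) (e c) = cx (co e u) (co e w) c.
Proof. by move=> eON u w c; rewrite crossV_coord ON_dotsum. Qed.

Lemma crossDl (e : 'I_3 -> V) : orthonormalV dotV e -> forall a u u' w,
  crossV dotV e (a *: u + u') w = a *: crossV dotV e u w + crossV dotV e u' w.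
Proof.
move=> eON a u u' w; apply: (ON_ext eON) => c.
rewrite dotDl dotZl !cross_co //.
by move: c; apply: ord3P; rewrite /cx /co /= !dotDl !dotZl; ring.
Qed.
Lemma crossDr (e : 'I_3 -> V) : orthonormalV dotV e -> forall a u u' w,
  crossV dotV e w (a *: u + u') = a *: crossV dotV e w u + crossV dotV e w u'.
Proof.
move=> eON a u u' w; apply: (ON_ext eON) => c.
rewrite dotDl dotZl !cross_co //.
by move: c; apply: ord3P; rewrite /cx /co /= !dotDl !dotZl; ring.
Qed.
Lemma cross_triple (e : 'I_3 -> V) : orthonormalV dotV e -> forall u w x,
  dotV (crossV dotV e u w) x = dotV u (crossV dotV e w x).
Proof.
move=> eON u w x; rewrite (ON_dot eON) [RHS](ON_dot eON).
under eq_bigr do rewrite cross_co //.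
under [in RHS]eq_bigr do rewrite cross_co //.
by rewrite !sum3 /cx /co /=; ring.
Qed.
Lemma cross_anti (e : 'I_3 -> V) : orthonormalV dotV e -> forall u v w,
  dotV u (crossV dotV e v w) + dotV (crossV dotV e v u) w = 0.
Proof.
move=> eON u v w; rewrite (ON_dot eON u) [X in _ + X](ON_dot eON).
under eq_bigr do rewrite cross_co //.
under [X in _ + X]eq_bigr do rewrite cross_co //.
by rewrite !sum3 /cx /co /=; ring.
Qed.
Lemma cross0l (e : 'I_3 -> V) w : crossV dotV e 0 w = 0.
Proof.
rewrite /crossV big1 // => i _; rewrite big1 // => j _; rewrite big1 // => k _.
by rewrite dot0l mul0r mulr0 scale0r.
Qed.

Lemma cross_inv (e f : 'I_3 -> V) : posONV pi OR dotV e -> posONV pi OR dotV f ->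
  forall u w, crossV dotV e u w = crossV dotV f u w.
Proof.
case=> [[C [eC detC]] eON] [[C' [fC detC']] fON] u w.
pose Q : 'M[R]_3 := \matrix_(i, a) dotV (e i) (f a).
have eQ : forall i, e i = \sum_a Q i a *: f a.
  by move=> i; rewrite {1}(ON_expand fON (e i)); apply: eq_bigr => a _; rewrite mxE.
have coE : forall u, co e u = fun i => \sum_a Q i a * co f u a.
  move=> x; apply: functional_extensionality => i.
  by rewrite /co eQ dot_sumr; apply: eq_bigr => a _; rewrite dotZr.
have QC : C = Q *m C'.
  apply/matrixP => i k; rewrite mxE.
  have h : \sum_k C i k *: o k = \sum_k (\sum_a Q i a * C' a k) *: o k.
    rewrite -[LHS]eC eQ.
    under eq_bigr do rewrite fC scaler_sumr.
    rewrite exchange_big; apply: eq_bigr => l _; rewrite scaler_suml.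
    by apply: eq_bigr => a _; rewrite scalerA.
  exact: (o_uniq h).
have dQ : 0 < \det Q.
  by move: detC; rewrite QC det_mulmx pmulr_lgt0.
have QQ : Q *m Q^T = 1%:M.
  apply/matrixP => i j; rewrite !mxE -eON (ON_dot fON).
  by apply: eq_bigr => a _; rewrite !mxE.
have d1 : \det Q = 1.
  have : \det Q * \det Q = 1 by rewrite -{2}det_tr -det_mulmx QQ det1.
  by move=> h; nra.
apply: (ON_ext fON) => c.
rewrite cross_co // crossV_coord dot_suml !coE.
under eq_bigr do rewrite dotZl.
have -> : \sum_i cx (fun i0 : 'I_3 => \sum_a Q i0 a * co f u a)
             (fun i0 : 'I_3 => \sum_a Q i0 a * co f w a) i * dotV (e i) (f c)
  = \sum_i cx (fun i0 : 'I_3 => \sum_a Q i0 a * co f u a)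
             (fun i0 : 'I_3 => \sum_a Q i0 a * co f w a) i * Q i c.
  by apply: eq_bigr => i _; rewrite mxE.
by rewrite cx_cof d1 mul1r.
Qed.

Lemma sum_delta (F : 'I_3 -> R) i : \sum_l F l * (i == l)%:R = F i.
Proof.
rewrite (bigD1 i) //= eqxx mulr1 big1 ?addr0 // => l; rewrite eq_sym => /negbTE ->.
by rewrite mulr0.
Qed.

Lemma sum_delta' (F : 'I_3 -> R) i : \sum_l F l * (l == i)%:R = F i.
Proof.
rewrite (bigD1 i) //= eqxx mulr1 big1 ?addr0 // => l /negbTE ->.
by rewrite mulr0.
Qed.

Section WithF.
Variable f : 'I_3 -> V.
Hypothesis fP : posONV pi OR dotV f.
Let fON : orthonormalV dotV f := fP.2.

Definition gl (c : 'I_3) : M := epsilon (inhabits 0) (fun x => pi x = f c).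
Lemma glP c : pi (gl c) = f c.
Proof. exact: (epsilon_spec (inhabits 0) _ (pisurj (f c))). Qed.

Definition unE (w : M) : V := \sum_c dDu (sp w (gl c)) *: f c.
Lemma unE_eps y : unE (eps y) = pi y.
Proof.
rewrite /unE; under eq_bigr do rewrite DuE -dotpi glP.
by rewrite -(ON_expand fON).
Qed.

Definition beta (z : M) (A : E) : V := unE (z - lift A (pi z)).

Lemma ker_eps x : pi x = 0 -> exists y, x = eps y.
Proof. by move/piker. Qed.

Lemma beta_dot z A u : dotV (beta z A) u = dDu (sp z (lift A u)).
Proof.
have [y hy] : exists y, z - lift A (pi z) = eps y.
  by apply: ker_eps; rewrite linearB pi_lift subrr.
rewrite /beta hy unE_eps.
have -> : dotV (pi y) u = dotV (pi y) (pi (lift A u)) by rewrite pi_lift.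
by rewrite dotpi -DuE -hy DuD DuN lift_iso oppr0 addr0.
Qed.

Lemma beta_wdl z (A : E) a x : a \in sval A -> z = a + eps x -> beta z A = pi x.
Proof.
move=> aA ->; apply: dot_ext => u; rewrite beta_dot DuD DuE (E_iso aA (lift_in A u)).
by rewrite add0r -dotpi pi_lift.
Qed.

Lemma beta_wd z (A : E) v :
  (exists a x, a \in sval A /\ pi x = v /\ z = a + eps x) <-> v = beta z A.
Proof.
split.
  by case=> a [x [aA [<- ->]]]; rewrite (beta_wdl aA (erefl _)).
move=> ->.
have [y hy] : exists y, z - lift A (pi z) = eps y.
  by apply: ker_eps; rewrite linearB pi_lift subrr.
exists (lift A (pi z)), y; split; first exact: lift_in.
have zE : z = lift A (pi z) + eps y by rewrite -hy addrC subrK.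
by split => //; rewrite (beta_wdl (lift_in A _) zE).
Qed.

Lemma beta_eps x A : beta (eps x) A = pi x.
Proof. by apply: (beta_wdl (mem0v _)); rewrite add0r. Qed.
Lemma betaD x y A : beta (x + y) A = beta x A + beta y A.
Proof. by apply: dot_ext => u; rewrite dotDl !beta_dot DuD. Qed.
Lemma betaZ a x A : beta (a *: x) A = a *: beta x A.
Proof. by apply: dot_ext => u; rewrite dotZl !beta_dot DuZ. Qed.
Lemma beta_sum A I (r : seq I) (P : pred I) (F : I -> M) :
  beta (\sum_(i <- r | P i) F i) A = \sum_(i <- r | P i) beta (F i) A.
Proof. exact: (gsum (g := fun x => beta x A) (fun a b => betaD a b A)). Qed.
Lemma betaN x A : beta (- x) A = - beta x A.
Proof. by rewrite -scaleN1r betaZ scaleN1r. Qed.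

Lemma N_anti (B A : E) x y :
  dDu (sp (lift B x) (lift A y)) + dDu (sp (lift B y) (lift A x)) = 0.
Proof.
have [q hq] : exists q, lift B y = lift A y + eps q.
  have [q hq] : exists q, lift B y - lift A y = eps q.
    by apply: ker_eps; rewrite linearB !pi_lift subrr.
  by exists q; rewrite -hq addrC subrK.
have h := lift_iso B x y; rewrite hq DuDr DuEr in h.
rewrite hq DuD DuE lift_iso add0r.
have -> : dRe (sp q (lift A x)) = dRe (sp (lift B x) q).
  by rewrite -!dotpi !pi_lift dotC.
exact: h.
Qed.

Definition Nm (B A : E) (i c : 'I_3) : R := dDu (sp (lift B (f i)) (lift A (f c))).
Lemma Nii B A i : Nm B A i i = 0.
Proof. by have := N_anti B A (f i) (f i); rewrite -/(Nm B A i i) => h; lra. Qed.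
Lemma Nac B A i c : Nm B A i c = - Nm B A c i.
Proof. by have := N_anti B A (f i) (f c); rewrite -/(Nm B A i c) -/(Nm B A c i) => h; lra. Qed.

Definition omc (B A : E) (c : 'I_3) : R :=
  match (c : nat) with 0 => Nm B A i1 i2 | 1 => Nm B A i2 i0 | _ => Nm B A i0 i1 end.
Definition minus (B A : E) : V := \sum_c omc B A c *: f c.

Lemma co_minus B A : co f (minus B A) = omc B A.
Proof. by apply: functional_extensionality => c; rewrite /co ON_dotsum. Qed.

Lemma lift_rel (B A : E) v :
  lift B v = lift A v + eps (lift A (crossV dotV f (minus B A) v)).
Proof.
have [y hy] : exists y, lift B v - lift A v = eps y.
  by apply: ker_eps; rewrite linearB !pi_lift subrr.
suff h : eps y = eps (lift A (crossV dotV f (minus B A) v)).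
  by rewrite -h -hy addrC subrK.
apply/epsEP; rewrite pi_lift; apply: (ON_ext fON) => c.
have -> : dotV (pi y) (f c) = dotV (pi y) (pi (lift A (f c))) by rewrite pi_lift.
rewrite dotpi -DuE -hy DuD DuN lift_iso oppr0 addr0.
have vE := ON_expand fON v.
have -> : lift B v = lift B (\sum_i dotV v (f i) *: f i) by rewrite -vE.
rewrite lift_sum Du_suml; under eq_bigr do rewrite liftZ DuZ -/(Nm B A _ c).
rewrite cross_co // co_minus.
move: c; apply: ord3P; rewrite sum3 /omc /cx /co /= !Nii ?(Nac B A i1 i0) ?(Nac B A i2 i1) ?(Nac B A i0 i2); ring.
Qed.

Lemma cross_ei (e : 'I_3 -> V) : orthonormalV dotV e -> forall d i,
  crossV dotV e d (e i) = \sum_j (\sum_k levi R i j k * dotV d (e k)) *: e j.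
Proof.
move=> eON d i; apply: (ON_ext eON) => c.
rewrite cross_co // ON_dotsum //.
have -> : co e (e i) = fun l => (i == l)%:R.
  by apply: functional_extensionality => l; rewrite /co eON.
move: i c; apply: ord3P; apply: ord3P; rewrite sum3 !levi_cx /cx /co /=; ring.
Qed.

Lemma sum_eps_lift (A : E) (e : 'I_3 -> V) : orthonormalV dotV e -> forall d i,
  \sum_j \sum_k (levi R i j k * dotV d (e k)) *: eps (lift A (e j))
  = eps (lift A (crossV dotV e d (e i))).
Proof.
move=> eON d i; rewrite cross_ei // lift_sum linear_sum; apply: eq_bigr => j _.
by rewrite liftZ linearZ_LR scaler_suml.
Qed.

Lemma rel_SubRel (B A : E) d :
  (forall v, lift B v = lift A v + eps (lift A (crossV dotV f d v))) ->
  SubRel eps pi OR dotV (sval B) (sval A) d.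
Proof.
move=> h e eP xA xB HA HB i.
have xAE : forall j, xA j = lift A (e j).
  by move=> j; case: (HA j) => h1 h2; rewrite (lift_uniq h1 h2).
have xBE : forall j, xB j = lift B (e j).
  by move=> j; case: (HB j) => h1 h2; rewrite (lift_uniq h1 h2).
rewrite xBE h xAE.
under [X in _ = _ + X]eq_bigr do under eq_bigr do rewrite xAE.
by rewrite sum_eps_lift ?(cross_inv fP eP) //; case: eP.
Qed.

Lemma cross_inj u u' :
  (forall i, crossV dotV f u (f i) = crossV dotV f u' (f i)) -> u = u'.
Proof.
move=> h.
have h' : forall i c, cx (co f u) (co f (f i)) c = cx (co f u') (co f (f i)) c.
  by move=> i c; rewrite -!cross_co // h.
apply: (ON_ext fON); apply: ord3P.
- by have := h' i1 i2; rewrite /cx /co /= !fON /= !mulr1 !mulr0 !subr0.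
- by have := h' i2 i0; rewrite /cx /co /= !fON /= !mulr1 !mulr0 !subr0.
- by have := h' i0 i1; rewrite /cx /co /= !fON /= !mulr1 !mulr0 !subr0.
Qed.

Lemma SubRel_iff (A B : E) d :
  SubRel eps pi OR dotV (sval B) (sval A) d <-> d = minus B A.
Proof.
split; last by move=> ->; apply: rel_SubRel; exact: lift_rel.
move=> H.
have := H f fP (fun j => lift A (f j)) (fun j => lift B (f j))
  (fun j => conj (lift_in A _) (pi_lift A _)) (fun j => conj (lift_in B _) (pi_lift B _)).
move=> h; apply: cross_inj => i; have := h i.
rewrite (sum_eps_lift A fON) {1}(lift_rel B A) => /addrI /eps_lift_inj ->.
by [].
Qed.

Lemma minus_add (A B C : E) : minus B A + minus C B = minus C A.
Proof.
apply/SubRel_iff; apply: rel_SubRel => v.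
rewrite (lift_rel C B v) (lift_rel B A v) (eps_lift B A) -addrA -linearD -liftD.
by have := crossDl fON 1 (minus B A) (minus C B) v; rewrite !scale1r => <-.
Qed.

Lemma ON_coef0 (a : 'I_3 -> R) : \sum_i a i *: f i = 0 -> forall j, a j = 0.
Proof. by move=> h j; rewrite -(ON_dotsum a j fON) h dot0l. Qed.

Lemma mkE_mem (x : 'I_3 -> M) y : y \in <<[tuple x i | i < 3]>>%VS ->
  exists a : 'I_3 -> R, y = \sum_i a i *: x i.
Proof.
move/coord_span => ->; eexists; apply: eq_bigr => i _.
by rewrite -tnth_nth tnth_mktuple.
Qed.
Lemma mkE_memI (x : 'I_3 -> M) (a : 'I_3 -> R) :
  \sum_i a i *: x i \in <<[tuple x i | i < 3]>>%VS.
Proof.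
apply: memv_suml => i _; apply: memvZ; apply: memv_span.
by have := mem_tnth i [tuple x i | i < 3]; rewrite tnth_mktuple.
Qed.

Lemma mkE_inE (x : 'I_3 -> M) : (forall i, pi (x i) = f i) ->
  (forall i j, dDu (sp (x i) (x j)) = 0) -> inE eps sp <<[tuple x i | i < 3]>>%VS.
Proof.
move=> hx hiso.
have piS : forall a : 'I_3 -> R, pi (\sum_i a i *: x i) = \sum_i a i *: f i.
  by move=> a; rewrite linear_sum; apply: eq_bigr => i _; rewrite linearZ_LR hx.
split.
  have fX : free [tuple x i | i < 3].
    apply/freeP => k Hk.
    have hs : \sum_i k i *: x i = 0.
      by rewrite -[RHS]Hk; apply: eq_bigr => j _; rewrite -tnth_nth tnth_mktuple.
    by apply: ON_coef0; rewrite -piS hs linear0.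
  by move: fX; rewrite /free => /eqP ->; rewrite size_tuple.
split.
  move=> y y' /mkE_mem [a ->] /mkE_mem [b ->].
  rewrite Du_suml big1 // => i _; rewrite DuZ Du_sumr big1 ?mulr0 // => j _.
  by rewrite DuZr hiso mulr0.
move=> y /mkE_mem [a ->] [z hz].
have h0 : forall j, a j = 0.
  by apply: ON_coef0; rewrite -piS hz pi_eps.
by rewrite big1 // => i _; rewrite h0 scale0r.
Qed.

Definition mkEl (x : 'I_3 -> M) (hx : forall i, pi (x i) = f i)
  (hiso : forall i j, dDu (sp (x i) (x j)) = 0) : E :=
  exist _ _ (mkE_inE hx hiso).

Lemma lift_mkE x hx hiso v :
  lift (@mkEl x hx hiso) v = \sum_i dotV v (f i) *: x i.
Proof.
apply: lift_uniq; first exact: mkE_memI.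
rewrite linear_sum [RHS](ON_expand fON v); apply: eq_bigr => i _.
by rewrite linearZ_LR hx.
Qed.

Lemma E_eq (B B' : E) : (forall w, lift B w = lift B' w) -> B = B'.
Proof.
move=> h.
have e : sval B = sval B'.
  apply/vspaceP => x; apply/idP/idP => hx.
    by rewrite -(lift_pi hx) h lift_in.
  by rewrite -(lift_pi hx) -h lift_in.
move: B B' h e => [P HP] [P' HP'] /= _ e; subst P'.
by rewrite (proof_irrelevance _ HP HP').
Qed.

Lemma cross0r (e : 'I_3 -> V) w : crossV dotV e w 0 = 0.
Proof.
rewrite /crossV big1 // => i _; rewrite big1 // => j _; rewrite big1 // => k _.
by rewrite dot0l !mulr0 scale0r.
Qed.

Lemma cross_sumr u (a : 'I_3 -> R) (w : 'I_3 -> V) :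
  crossV dotV f u (\sum_i a i *: w i) = \sum_i a i *: crossV dotV f u (w i).
Proof.
have cD : forall x y, crossV dotV f u (x + y) = crossV dotV f u x + crossV dotV f u y.
  by move=> x y; have := crossDr fON 1 x y u; rewrite !scale1r.
rewrite (gsum (g := crossV dotV f u) cD); apply: eq_bigr => i _.
by have := crossDr fON (a i) (w i) 0 u; rewrite addr0 cross0r addr0.
Qed.

Lemma minus_ex (A : E) v : exists B : E, minus B A = v.
Proof.
pose x i := lift A (f i) + eps (lift A (crossV dotV f v (f i))).
have hx : forall i, pi (x i) = f i by move=> i; rewrite linearD pi_lift pi_eps addr0.
have hiso : forall i j, dDu (sp (x i) (x j)) = 0.
  move=> i j; rewrite /x DuD !DuDr DuE DuEr DuE ReEr lift_iso !Re_lift addr0 add0r.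
  exact: cross_anti.
exists (mkEl hx hiso); symmetry; apply/SubRel_iff; apply: rel_SubRel => w.
rewrite lift_mkE /x; under eq_bigr do rewrite scalerDr.
rewrite big_split /=; congr (_ + _).
  by rewrite [in RHS](ON_expand fON w) lift_sum; apply: eq_bigr => i _; rewrite liftZ.
rewrite [in RHS](ON_expand fON w) cross_sumr lift_sum linear_sum.
by apply: eq_bigr => i _; rewrite liftZ linearZ_LR.
Qed.

Lemma minus_uniq (A B B' : E) : minus B A = minus B' A -> B = B'.
Proof. by move=> h; apply: E_eq => w; rewrite (lift_rel B A) (lift_rel B' A) h. Qed.

Lemma E_nonempty : exists A : E, True.
Proof.
pose b i j := dDu (sp (gl i) (gl j)).
pose x i := gl i - \sum_j (b i j / 2) *: eps (gl j).
have hx : forall i, pi (x i) = f i.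
  move=> i; rewrite /x linearB linear_sum big1 ?subr0 ?glP // => j _.
  by rewrite linearZ_LR pi_eps scaler0.
have Reg : forall i j, dRe (sp (gl i) (gl j)) = (i == j)%:R.
  by move=> i j; rewrite -dotpi !glP fON.
have hiso : forall i j, dDu (sp (x i) (x j)) = 0.
  move=> i j; rewrite /x DuD DuN !DuDr !DuNr Du_suml Du_sumr.
  under eq_bigr do rewrite DuZr DuEr Reg.
  rewrite sum_delta.
  under eq_bigr do rewrite DuZ DuE Reg.
  rewrite sum_delta' Du_suml big1 ?oppr0 ?subr0; last first.
    move=> k _; rewrite DuZ DuE Re_sumr big1 ?mulr0 // => l _.
    by rewrite ReZr ReEr mulr0.
  have -> : b j i = b i j by rewrite /b spC.
  rewrite -/(b i j); lra.
by exists (mkEl hx hiso).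
Qed.

Lemma beta_screw z : is_screw minus pi OR dotV (beta z) (pi z).
Proof.
move=> P Q e eP; apply: dot_ext => u.
rewrite dotBl !beta_dot (lift_rel Q P u) DuDr DuEr addrAC subrr add0r.
rewrite -dotpi pi_lift (cross_inv eP fP) cross_triple //.
Qed.

Lemma screw_uniq (A : E) s r r' :
  is_screw minus pi OR dotV s r -> is_screw minus pi OR dotV s r' -> r = r'.
Proof.
move=> Hr Hr'; apply: cross_inj => i.
have [B hB] := minus_ex A (f i).
by rewrite -hB -(Hr A B f fP) -(Hr' A B f fP).
Qed.

Lemma sp_Du z1 z2 (P : E) :
  dDu (sp z1 z2) = dotV (pi z1) (beta z2 P) + dotV (beta z1 P) (pi z2).
Proof.
have [y hy] : exists y, z2 - lift P (pi z2) = eps y.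
  by apply: ker_eps; rewrite linearB pi_lift subrr.
have z2E : z2 = lift P (pi z2) + eps y by rewrite -hy addrC subrK.
rewrite (beta_wdl (lift_in P _) z2E) beta_dot.
have -> : sp z1 z2 = sp z1 (lift P (pi z2) + eps y) by rewrite -z2E.
by rewrite DuDr DuEr dotpi addrC.
Qed.

Lemma cross_suml (e : 'I_3 -> V) : orthonormalV dotV e -> forall (a : 'I_3 -> R) (w : 'I_3 -> V) u,
  crossV dotV e (\sum_i a i *: w i) u = \sum_i a i *: crossV dotV e (w i) u.
Proof.
move=> eON a w u.
have cD : forall x y, crossV dotV e (x + y) u = crossV dotV e x u + crossV dotV e y u.
  by move=> x y; have := crossDl eON 1 x y u; rewrite !scale1r.
rewrite (gsum (g := fun x => crossV dotV e x u) cD); apply: eq_bigr => i _.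
by have := crossDl eON (a i) (w i) 0 u; rewrite addr0 cross0l addr0.
Qed.

Lemma orient b : posM eps OR b ->
  forall (P : E) e, posONV pi OR dotV e ->
  forall rl : 'I_3 -> V,
    (forall k, is_screw minus pi OR dotV (fun Q => crossV dotV e (e k) (minus Q P)) (rl k)) ->
    exists A0 A1 : 'M[R]_3,
      (forall j Q, beta (b j) Q =
         \sum_k (A0 j k *: crossV dotV e (e k) (minus Q P) + A1 j k *: rl k)) /\
      0 < \det A0.
Proof.
move=> [_ [B0 [B1 [bE dB]]]] P e eP rl Hrl.
have eON := eP.2.
have rlE : forall k, rl k = e k.
  move=> k; symmetry; apply: (screw_uniq P _ (Hrl k)) => Q1 Q2 e' e'P /=.
  rewrite -(minus_add P Q1 Q2) (cross_inv e'P eP).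
  have := crossDr eON 1 (minus Q1 P) (minus Q2 Q1) (e k); rewrite !scale1r => ->.
  by rewrite addrAC subrr add0r.
exists (\matrix_(j, k) dotV (pi (b j)) (e k)), (\matrix_(j, k) dotV (beta (b j) P) (e k)).
split.
  move=> j Q; have h := beta_screw (b j) P Q eP.
  rewrite big_split /=.
  under [X in _ = _ + X]eq_bigr do rewrite rlE mxE.
  under eq_bigr do rewrite mxE.
  by rewrite -cross_suml // -!(ON_expand eON) -h subrK.
case: eP => [[C [eC dC]] _].
have piB : forall j, pi (b j) = \sum_k B0 j k *: o k.
  move=> j; rewrite bE linear_sum; apply: eq_bigr => k _.
  by rewrite linearD !linearZ_LR pi_eps scaler0 addr0.
have BC : B0 = (\matrix_(j, k) dotV (pi (b j)) (e k)) *m C.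
  apply/matrixP => j l; rewrite mxE.
  have h : \sum_k B0 j k *: o k = \sum_l (\sum_k (\matrix_(j, k) dotV (pi (b j)) (e k)) j k * C k l) *: o l.
    rewrite -piB {1}(ON_expand eON (pi (b j))).
    under eq_bigr do rewrite [X in _ *: X]eC scaler_sumr.
    rewrite exchange_big; apply: eq_bigr => l' _; rewrite scaler_suml.
    by apply: eq_bigr => k _; rewrite scalerA mxE.
  exact: (o_uniq h).
by move: dB; rewrite BC det_mulmx pmulr_lgt0.
Qed.

Lemma crossP m : posM eps OR m -> orthonormalM sp m ->
  forall (x y : 'I_3 -> dual R) r1 r2,
    is_screw minus pi OR dotV (beta (dcomb eps m x)) r1 ->
    is_screw minus pi OR dotV (beta (dcomb eps m y)) r2 ->
    forall e, posONV pi OR dotV e -> forall P,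
      beta (\sum_i \sum_j \sum_k
              dscale eps (dual_mul (dual_real (levi R i j k))
                                   (dual_mul (x i) (y j))) (m k)) P
      = crossV dotV e r1 (beta (dcomb eps m y) P)
        + crossV dotV e (beta (dcomb eps m x) P) r2.
Proof.
move=> mP mON x y r1 r2 H1 H2 e eP P.
rewrite -(screw_uniq P (beta_screw _) H1) -(screw_uniq P (beta_screw _) H2).
have rP : posONV pi OR dotV (fun k => pi (m k)).
  case: mP => _ [A0 [A1 [mE dA]]]; split.
    exists A0; split => // j; rewrite mE linear_sum; apply: eq_bigr => k _.
    by rewrite linearD !linearZ_LR pi_eps scaler0 addr0.
  by move=> i j; rewrite dotpi mON.
have rON := rP.2.
rewrite !(cross_inv eP rP).
have hS : forall k l, dotV (beta (m k) P) (pi (m l)) = - dotV (beta (m l) P) (pi (m k)).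
  move=> k l; have := sp_Du (m l) (m k) P; rewrite mON /= dotC => h.
  by apply/eqP; rewrite -subr_eq0 opprK -h.
have hS0 : forall k, dotV (beta (m k) P) (pi (m k)) = 0.
  by move=> k; have := hS k k => h; lra.
have hR : forall k l, dotV (pi (m k)) (pi (m l)) = (k == l)%:R.
  by move=> k l; rewrite dotpi mON.
apply: (ON_ext rON); apply: ord3P;
  rewrite /= dotDl !cross_co // /cx /co /dcomb /= !sum3 !betaD /dscale ?betaD !betaZ !beta_eps
    !linearD !linearZ_LR !pi_eps !scaler0 !addr0 !dotDl !dotZl !hR /=
    ?(hS i1 i0) ?(hS i2 i1) ?(hS i0 i2) ?hS0 !levi_cx /cx /=; ring.
Qed.

Lemma mainF :
  exists minus : Espace eps sp -> Espace eps sp -> V,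
    (forall (A B : Espace eps sp) d,
        SubRel eps pi OR dotV (proj1_sig B) (proj1_sig A) d <-> d = minus B A) /\
    (forall A B C : Espace eps sp, minus B A + minus C B = minus C A) /\
    (forall (A : Espace eps sp) (v : V), exists! B, minus B A = v) /\
  exists beta : M -> Espace eps sp -> V,
    (forall z (A : Espace eps sp) v,
        (exists a x, a \in proj1_sig A /\ pi x = v /\ z = a + eps x) <-> v = beta z A) /\
    (forall z, exists r, is_screw minus pi OR dotV (beta z) r) /\
    (forall x y A, beta (x + y) A = beta x A + beta y A) /\
    (forall (a : R) x A, beta (a *: x) A = a *: beta x A) /\
    (forall x r, is_screw minus pi OR dotV (beta x) r -> forall A, beta (eps x) A = r) /\
    (forall x y, beta x =1 beta y -> x = y) /\
    (forall s r, is_screw minus pi OR dotV s r -> exists z, beta z =1 s) /\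
    (forall z1 z2 r1 r2 P,
        is_screw minus pi OR dotV (beta z1) r1 ->
        is_screw minus pi OR dotV (beta z2) r2 ->
        (dotV r1 r2, dotV r1 (beta z2 P) + dotV (beta z1 P) r2) = sp z1 z2) /\
    (forall b, posM eps OR b ->
       forall (P : Espace eps sp) e, posONV pi OR dotV e ->
       forall rl : 'I_3 -> V,
         (forall k, is_screw minus pi OR dotV
                      (fun Q => crossV dotV e (e k) (minus Q P)) (rl k)) ->
         exists A0 A1 : 'M[R]_3,
           (forall j Q, beta (b j) Q =
              \sum_k (A0 j k *: crossV dotV e (e k) (minus Q P) + A1 j k *: rl k)) /\
           0 < \det A0) /\
    (forall m, posM eps OR m -> orthonormalM sp m ->
       forall (x y : 'I_3 -> dual R) r1 r2,
         is_screw minus pi OR dotV (beta (dcomb eps m x)) r1 ->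
         is_screw minus pi OR dotV (beta (dcomb eps m y)) r2 ->
         forall e, posONV pi OR dotV e -> forall P,
           beta (\sum_i \sum_j \sum_k
                   dscale eps (dual_mul (dual_real (@levi R i j k))
                                        (dual_mul (x i) (y j))) (m k)) P
           = crossV dotV e r1 (beta (dcomb eps m y) P)
             + crossV dotV e (beta (dcomb eps m x) P) r2).
Proof.
have [A0 _] := E_nonempty.
exists minus; split; first exact: SubRel_iff.
split; first exact: minus_add.
split.
  move=> A v; have [B hB] := minus_ex A v; exists B; split; first exact: hB.
  by move=> B' hB'; apply: (@minus_uniq A); rewrite hB hB'.
exists beta; split; first exact: beta_wd.
split; first by move=> z; exists (pi z); exact: beta_screw.
split; first exact: betaD.
split; first exact: betaZ.
split.
  by move=> x r Hr A; rewrite beta_eps; exact: (screw_uniq A (beta_screw x) Hr).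
split.
  move=> x y h.
  have hw : forall A, beta (x - y) A = 0 by move=> A; rewrite betaD betaN h subrr.
  have H0 : is_screw minus pi OR dotV (beta (x - y)) 0.
    by move=> P Q e _; rewrite !hw subrr cross0l.
  have := screw_uniq A0 (beta_screw (x - y)) H0.
  move/ker_eps => [w hw'].
  have := hw A0; rewrite hw' beta_eps => /eps0P.
  by rewrite -hw' => /eqP; rewrite subr_eq0 => /eqP.
split.
  move=> s r Hs.
  exists (lift A0 r + eps (lift A0 (s A0))) => Q.
  have hz : beta (lift A0 r + eps (lift A0 (s A0))) A0 = s A0.
    by rewrite (beta_wdl (lift_in A0 r) (erefl _)) pi_lift.
  have pz : pi (lift A0 r + eps (lift A0 (s A0))) = r.
    by rewrite linearD pi_lift pi_eps addr0.
  have := beta_screw (lift A0 r + eps (lift A0 (s A0))) A0 Q fP.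
  rewrite pz hz -(Hs A0 Q f fP) => /eqP; rewrite -subr_eq0 opprB addrA subrK subr_eq0.
  by move/eqP.
split.
  move=> z1 z2 r1 r2 P H1 H2.
  rewrite -(screw_uniq P (beta_screw z1) H1) -(screw_uniq P (beta_screw z2) H2).
  apply: injective_projections => /=; first by rewrite dotpi.
  exact: (esym (sp_Du z1 z2 P)).
split; first exact: orient.
exact: crossP.
Qed.

End WithF.

Lemma main_all :
  \dim (fullv : {vspace V}) = 3%N /\
  (forall u w, dotV u w = dotV w u) /\
  (forall (a : R) u u' w, dotV (a *: u + u') w = a * dotV u w + dotV u' w) /\
  (forall u, u != 0 -> 0 < dotV u u) /\
  exists minus : Espace eps sp -> Espace eps sp -> V,
    (forall (A B : Espace eps sp) d,
        SubRel eps pi OR dotV (proj1_sig B) (proj1_sig A) d <-> d = minus B A) /\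
    (forall A B C : Espace eps sp, minus B A + minus C B = minus C A) /\
    (forall (A : Espace eps sp) (v : V), exists! B, minus B A = v) /\
  exists beta : M -> Espace eps sp -> V,
    (forall z (A : Espace eps sp) v,
        (exists a x, a \in proj1_sig A /\ pi x = v /\ z = a + eps x) <-> v = beta z A) /\
    (forall z, exists r, is_screw minus pi OR dotV (beta z) r) /\
    (forall x y A, beta (x + y) A = beta x A + beta y A) /\
    (forall (a : R) x A, beta (a *: x) A = a *: beta x A) /\
    (forall x r, is_screw minus pi OR dotV (beta x) r -> forall A, beta (eps x) A = r) /\
    (forall x y, beta x =1 beta y -> x = y) /\
    (forall s r, is_screw minus pi OR dotV s r -> exists z, beta z =1 s) /\
    (forall z1 z2 r1 r2 P,
        is_screw minus pi OR dotV (beta z1) r1 ->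
        is_screw minus pi OR dotV (beta z2) r2 ->
        (dotV r1 r2, dotV r1 (beta z2 P) + dotV (beta z1 P) r2) = sp z1 z2) /\
    (forall b, posM eps OR b ->
       forall (P : Espace eps sp) e, posONV pi OR dotV e ->
       forall rl : 'I_3 -> V,
         (forall k, is_screw minus pi OR dotV
                      (fun Q => crossV dotV e (e k) (minus Q P)) (rl k)) ->
         exists A0 A1 : 'M[R]_3,
           (forall j Q, beta (b j) Q =
              \sum_k (A0 j k *: crossV dotV e (e k) (minus Q P) + A1 j k *: rl k)) /\
           0 < \det A0) /\
    (forall m, posM eps OR m -> orthonormalM sp m ->
       forall (x y : 'I_3 -> dual R) r1 r2,
         is_screw minus pi OR dotV (beta (dcomb eps m x)) r1 ->
         is_screw minus pi OR dotV (beta (dcomb eps m y)) r2 ->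
         forall e, posONV pi OR dotV e -> forall P,
           beta (\sum_i \sum_j \sum_k
                   dscale eps (dual_mul (dual_real (@levi R i j k))
                                        (dual_mul (x i) (y j))) (m k)) P
           = crossV dotV e r1 (beta (dcomb eps m y) P)
             + crossV dotV e (beta (dcomb eps m x) P) r2).
Proof.
have [f fP] := exists_ON.
split; first exact: dimV.
split; first exact: dotC.
split; first by move=> a u u' w; rewrite dotDl dotZl.
split; first exact: dot_pos.
exact: (mainF fP).
Qed.

End Main.

Theorem theorem3 (R : realType) (M V : vectType R)
  (eps : {linear M -> M}) (sp : M -> M -> dual R) (OR : 'I_3 -> M)
  (pi : {linear M -> V}) (dotV : V -> V -> R) :
  (* M is a D-module: eps^2 = 0 *)
  (forall x, eps (eps x) = 0) ->
  (* M is free of rank 3 over D *)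
  (exists b, is_Dbasis eps b) ->
  (* o is a symmetric D-bilinear map *)
  (forall x y, sp x y = sp y x) ->
  (forall x y z, sp (x + y) z = dual_add (sp x z) (sp y z)) ->
  (forall (a : R) x y, sp (a *: x) y = dual_mul (dual_real a) (sp x y)) ->
  (forall x y, sp (eps x) y = dual_mul (dual_epsilon R) (sp x y)) ->
  (* positivity *)
  (forall x, 0 <= dRe (sp x x)) ->
  (forall x, dRe (sp x x) = 0 <-> exists y, x = eps y) ->
  (* the orientation OR of M is the class of the D-basis OR *)
  is_Dbasis eps OR ->
  (* V = M / eps M with quotient map pi *)
  (forall v, exists x, pi x = v) ->
  (forall x, pi x = 0 <-> exists y, x = eps y) ->
  (* the induced inner product on V *)
  (forall x y, dotV (pi x) (pi y) = dRe (sp x y)) ->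
  (* ---- E is a 3-dim Euclidean affine space modelled on (V, ., or) ---- *)
  \dim (fullv : {vspace V}) = 3%N /\
  (forall u w, dotV u w = dotV w u) /\
  (forall (a : R) u u' w, dotV (a *: u + u') w = a * dotV u w + dotV u' w) /\
  (forall u, u != 0 -> 0 < dotV u u) /\
  exists minus : Espace eps sp -> Espace eps sp -> V,
    (* minus B A = B - A is well defined by the described recipe *)
    (forall (A B : Espace eps sp) d,
        SubRel eps pi OR dotV (proj1_sig B) (proj1_sig A) d <-> d = minus B A) /\
    (* Weyl's axioms *)
    (forall A B C : Espace eps sp, minus B A + minus C B = minus C A) /\
    (forall (A : Espace eps sp) (v : V), exists! B, minus B A = v) /\
  (* ---- the map beta : M -> S ---- *)
  exists beta : M -> Espace eps sp -> V,
    (* well defined: z = a + eps beta(z)(A) uniquely, a in A *)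
    (forall z (A : Espace eps sp) v,
        (exists a x, a \in proj1_sig A /\ pi x = v /\ z = a + eps x) <-> v = beta z A) /\
    (* takes values in screws *)
    (forall z, exists r, is_screw minus pi OR dotV (beta z) r) /\
    (* D-linear *)
    (forall x y A, beta (x + y) A = beta x A + beta y A) /\
    (forall (a : R) x A, beta (a *: x) A = a *: beta x A) /\
    (forall x r, is_screw minus pi OR dotV (beta x) r -> forall A, beta (eps x) A = r) /\
    (* bijective onto the screws *)
    (forall x y, beta x =1 beta y -> x = y) /\
    (forall s r, is_screw minus pi OR dotV s r -> exists z, beta z =1 s) /\
    (* preserves the scalar product *)
    (forall z1 z2 r1 r2 P,
        is_screw minus pi OR dotV (beta z1) r1 ->
        is_screw minus pi OR dotV (beta z2) r2 ->
        (dotV r1 r2, dotV r1 (beta z2 P) + dotV (beta z1 P) r2) = sp z1 z2) /\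
    (* preserves the orientation: positive bases go to bases that are positive
       w.r.t. the basis l_i(Q) = e_i x (Q - P) of any positive orthonormal frame *)
    (forall b, posM eps OR b ->
       forall (P : Espace eps sp) e, posONV pi OR dotV e ->
       forall rl : 'I_3 -> V,
         (forall k, is_screw minus pi OR dotV
                      (fun Q => crossV dotV e (e k) (minus Q P)) (rl k)) ->
         exists A0 A1 : 'M[R]_3,
           (forall j Q, beta (b j) Q =
              \sum_k (A0 j k *: crossV dotV e (e k) (minus Q P) + A1 j k *: rl k)) /\
           0 < \det A0) /\
    (* hence preserves the cross product: beta (z1 x z2) = [beta z1, beta z2] *)
    (forall m, posM eps OR m -> orthonormalM sp m ->
       forall (x y : 'I_3 -> dual R) r1 r2,
         is_screw minus pi OR dotV (beta (dcomb eps m x)) r1 ->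
         is_screw minus pi OR dotV (beta (dcomb eps m y)) r2 ->
         forall e, posONV pi OR dotV e -> forall P,
           beta (\sum_i \sum_j \sum_k
                   dscale eps (dual_mul (dual_real (@levi R i j k))
                                        (dual_mul (x i) (y j))) (m k)) P
           = crossV dotV e r1 (beta (dcomb eps m y) P)
             + crossV dotV e (beta (dcomb eps m x) P) r2).

Proof.
move=> epsK _ spC spD spZ spE sppos sp0 ORb pisurj piker dotpi.
by apply: main_all.
Qed.
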